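(* Let $G$ be a canonically prime bichain graph, and let $\phi$ be an embedding of $G$ as an induced subgraph into a $Z$-grid $Z$ with vertex set $\{z_{i,j}:1\le i\le a,\ 1\le j\le b\}$ (for some $a,b\ge1$), where for $i<i'$, $z_{i,j}z_{i',j'}$ is an edge iff (1) $i$ odd, $i'=i+1$, $j>j'$; or (2) $i$ even, $i'=i+1$, $j\le j'$; or (3) $i$ even, $i'$ odd, $i'\ge i+3$. Then the set of columns $\{i : z_{i,j}\in\phi(V(G))\text{ for some }j\}$ is a set of consecutive integers.
   Context: A bichain graph is a bipartite graph admitting a bipartition in which each of the two parts can be divided into at most two chains, a chain being a set of vertices whose neighbourhoods are linearly ordered by inclusion. For bipartite graphs $G_1=(X_1,Y_1,E_1)$, $G_2=(X_2,Y_2,E_2)$ on disjoint vertex sets (given with bipartitions) define the disjoint union $G_1\oplus G_2=(X_1\cup X_2,Y_1\cup Y_2,E_1\cup E_2)$, the join $G_1\otimes G_2=(X_1\cup X_2,Y_1\cup Y_2,E_1\cup E_2\cup(X_1\times Y_2)\cup(X_2\times Y_1))$, and the skew join $G_1\oslash G_2=(X_1\cup X_2,Y_1\cup Y_2,E_1\cup E_2\cup(X_1\times Y_2))$. A bipartite graph is canonically prime if it cannot be written in the form $G_1\oplus G_2$, $G_1\otimes G_2$ or $G_1\oslash G_2$ with $G_1,G_2$ nonempty. In the grid, $i$ is the column index. *)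

(* Defs.v *)
From mathcomp Require Import all_boot.
Set Implicit Arguments. Unset Strict Implicit. Unset Printing Implicit Defensive.

Definition bipartite_wrt (V : finType) (e : rel V) (X : {set V}) : Prop :=
  symmetric e /\ (forall u v, e u v -> (u \in X) != (v \in X)).

Definition nbhd (V : finType) (e : rel V) (v : V) : {set V} := [set w | e v w].

Definition is_chain (V : finType) (e : rel V) (S : {set V}) : Prop :=
  forall u v, u \in S -> v \in S ->
    (nbhd e u \subset nbhd e v) \/ (nbhd e v \subset nbhd e u).

Definition bichain (V : finType) (e : rel V) (X : {set V}) : Prop :=
  bipartite_wrt e X /\
  (exists X1 X2 : {set V}, X = X1 :|: X2 /\ is_chain e X1 /\ is_chain e X2) /\
  (exists Y1 Y2 : {set V}, ~: X = Y1 :|: Y2 /\ is_chain e Y1 /\ is_chain e Y2).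

(* G = G1 (+) G2 where G1 is induced on A, G2 on B = ~: A *)
Definition is_disjoint_union (V : finType) (e : rel V) (X A : {set V}) : Prop :=
  forall u v, u \in A -> v \notin A -> ~~ e u v.

(* G = G1 (x) G2 : X1 complete to Y2 and X2 complete to Y1 *)
Definition is_join (V : finType) (e : rel V) (X A : {set V}) : Prop :=
  (forall u v, u \in A -> v \notin A -> u \in X -> v \notin X -> e u v) /\
  (forall u v, u \notin A -> v \in A -> u \in X -> v \notin X -> e u v).

(* G = G1 (/) G2 : X1 complete to Y2, no edges between X2 and Y1 *)
Definition is_skew_join (V : finType) (e : rel V) (X A : {set V}) : Prop :=
  (forall u v, u \in A -> v \notin A -> u \in X -> v \notin X -> e u v) /\
  (forall u v, u \notin A -> v \in A -> u \in X -> v \notin X -> ~~ e u v).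

Definition canonically_prime (V : finType) (e : rel V) (X : {set V}) : Prop :=
  forall A : {set V}, A != set0 -> ~: A != set0 ->
    ~ is_disjoint_union e X A /\ ~ is_join e X A /\ ~ is_skew_join e X A.

(* Z-grid adjacency on vertices z_{i,j} = (i, j) (1-based), case i < i' *)
Definition zgrid_lt (p q : nat * nat) : bool :=
  let: (i, j) := p in let: (i', j') := q in
  (i < i') &&
  [|| [&& odd i, i' == i.+1 & j' < j],
      [&& ~~ odd i, i' == i.+1 & j <= j']
    | [&& ~~ odd i, odd i' & i + 3 <= i']].

Definition zgrid_adj (p q : nat * nat) : bool := zgrid_lt p q || zgrid_lt q p.

Definition in_zgrid (a b : nat) (p : nat * nat) : bool :=
  (1 <= p.1 <= a) && (1 <= p.2 <= b).

Definition zgrid_embedding (V : finType) (e : rel V) (a b : nat)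
  (phi : V -> nat * nat) : Prop :=
  injective phi /\ (forall v, in_zgrid a b (phi v)) /\
  (forall u v, e u v = zgrid_adj (phi u) (phi v)).

Definition used_column (V : finType) (phi : V -> nat * nat) (i : nat) : Prop :=
  exists v, (phi v).1 = i.

(* Main.v *)
Require Import Defs.
From mathcomp Require Import all_boot.
From mathcomp Require Import zify.

Lemma adj_parity (p q : nat * nat) :
  zgrid_adj p q -> odd p.1 != odd q.1.
Proof.
case: p q => [i x] [k y]; rewrite /zgrid_adj /zgrid_lt /=.
case oi: (odd i); case ok: (odd k) => //=;
  by case/orP => /andP [_ /orP [/andP [/eqP E _]|//]]; first [move: ok; rewrite E /= oi | move: oi; rewrite E /= ok].
Qed.

Lemma adj_cross (p q : nat * nat) (j : nat) :
  p.1 < j -> j < q.1 -> zgrid_adj p q = ~~ odd p.1 && odd q.1.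
Proof.
case: p q => [i x] [k y] /= hi hk; rewrite /zgrid_adj /zgrid_lt.
have -> : (k < i) = false by lia.
have -> : (i < k) = true by lia.
have -> : (k == i.+1) = false by apply/eqP; lia.
rewrite !andbF /= orbF.
case oi: (odd i); case ok: (odd k) => //=.
case: (leqP (i + 3) k) => // h.
have hk2 : k = i.+2 by lia.
by move: ok; rewrite hk2 /= oi.
Qed.

Theorem lemma17 (V : finType) (e : rel V) (X : {set V})
  (a b : nat) (phi : V -> nat * nat) :
  1 <= a -> 1 <= b ->
  bichain e X -> canonically_prime e X ->
  zgrid_embedding e a b phi ->
  forall i k j, used_column phi i -> used_column phi k -> i <= j <= k ->
    used_column phi j.
Proof.
move=> _ _ [[_ bip] _] cp [_ [_ eE]] i k j [vi hvi] [vk hvk] /andP [hij hjk].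
case: (boolP [exists v, (phi v).1 == j]) => [/existsP [v /eqP hv]|hnot].
  by exists v.
exfalso.
have unused : forall v, (phi v).1 != j.
  move=> v; apply/negP => hv; move/negP: hnot; apply; apply/existsP; by exists v.
set A := [set v | (v \in X) == odd (phi v).1].
have duA : is_disjoint_union e X A.
  move=> u v; rewrite !inE => hu hv; apply/negP => huv.
  have h1 := bip _ _ huv.
  have h2 : odd (phi u).1 != odd (phi v).1 by apply: adj_parity; rewrite -eE.
  move: hu hv h1 h2; case: (u \in X); case: (v \in X); case: (odd _); case: (odd _) => //.
have hX : (forall v, (v \in X) = ~~ odd (phi v).1) \/ (forall v, (v \in X) = odd (phi v).1).
  case: (boolP (A == set0)) => [/eqP A0|An0].
    left => v; have : v \notin A by rewrite A0 inE.
    by rewrite inE; case: (v \in X); case: (odd _).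
  case: (boolP (~: A == set0)) => [/eqP A0|Ac0].
    right => v; have : v \notin ~: A by rewrite A0 inE.
    by rewrite !inE negbK; case: (v \in X); case: (odd _).
  by case: (cp A An0 Ac0).
have ij : i < j.
  rewrite ltn_neqAle hij andbT; apply/eqP => E; move: (unused vi); by rewrite hvi E eqxx.
have jk : j < k.
  rewrite ltn_neqAle hjk andbT; apply/eqP => E; move: (unused vk); by rewrite hvk E eqxx.
set L := [set v | (phi v).1 < j].
have Lgt : forall v, v \notin L -> j < (phi v).1.
  move=> v; rewrite inE -leqNgt => h; rewrite ltn_neqAle h andbT eq_sym; exact: unused.
have Ln0 : L != set0.
  apply/set0Pn; exists vi; by rewrite inE hvi.
have Lc0 : ~: L != set0.
  apply/set0Pn; exists vk; rewrite !inE hvk -leqNgt; exact: ltnW.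
case: hX => hX.
- have := cp L Ln0 Lc0; case=> _ [_ []]; split.
  + move=> u v hu hv; rewrite !hX negbK => hu' hv'.
    rewrite eE (adj_cross _ _ j) ?hu' ?hv' //; [by move: hu; rewrite inE|exact: Lgt].
  + move=> u v hu hv; rewrite !hX negbK => hu' hv'.
    rewrite eE; have -> : zgrid_adj (phi u) (phi v) = zgrid_adj (phi v) (phi u) by rewrite /zgrid_adj orbC.
    rewrite (adj_cross _ _ j) ?hu' ?hv' //; [by move: hv; rewrite inE|exact: Lgt].
- have := cp (~: L) Lc0 ltac:(by rewrite setCK); case=> _ [_ []]; split.
  + move=> u v hu hv; rewrite !hX => hu' hv'.
    rewrite eE; have -> : zgrid_adj (phi u) (phi v) = zgrid_adj (phi v) (phi u) by rewrite /zgrid_adj orbC.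
    rewrite (adj_cross _ _ j) ?hu' ?hv' //; [by move: hv; rewrite !inE negbK|apply: Lgt; by rewrite -in_setC].
  + move=> u v hu hv; rewrite !hX => hu' hv'.
    rewrite eE (adj_cross _ _ j) ?hu' ?hv' //; [by move: hu; rewrite !inE negbK|apply: Lgt; by rewrite -in_setC].
Qed.
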